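(* Consider a finite super-modular game with player set $\mathcal V$ and binary action sets $\{\pm1\}$. Then for every configuration $x\in\mathcal X$: (i) $f^-(f^+(x))$ and $f^+(f^-(x))$ are equilibria, and they are respectively the greatest and the least equilibria that are I-reachable from $x$; (ii) $f^-(g^+(x))$ and $f^+(g^-(x))$ are equilibria, and they are respectively the greatest and the least equilibria that are BR-reachable from $x$; (iii) if $x\in\mathcal X^*$, then $g^+(x)$ and $g^-(x)$ are equilibria, and they are respectively the greatest and the least equilibria BR-reachable from $x$. Moreover: (iv) the set of equilibria $\mathcal X^*$ is a nonempty complete lattice (for the componentwise order) and is globally I-stable; (v) $\underline x^*=f^+(g^-(-\mathbf 1))=f^+(-\mathbf 1)$ and $\overline x^*=f^-(g^+(+\mathbf 1))=f^-(+\mathbf 1)$ are respectively the least and the greatest equilibria; (vi) for any two equilibria $x,y\in\mathcal X^*$, $f^+(x\vee y)$ is the least equilibrium that is $\ge$ both $x$ and $y$, and $f^-(x\wedge y)$ is the greatest equilibrium that is $\le$ both $x$ and $y$; (vii) if $\underline x^*=\overline x^*=x^*$, then $\mathcal X^*=\{x^*\}$ is globally BR-stable.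
   Context: Game: finite player set $\mathcal V$, each player has action set $\{-1,+1\}$, configurations $x\in\mathcal X=\{-1,+1\}^{\mathcal V}$, utilities $u_i:\mathcal X\to\mathbb R$; write $u_i(x)=u_i(x_i,x_{-i})$. Best response: $\mathcal B_i(x_{-i})=\arg\max_{x_i\in\{\pm1\}}u_i(x_i,x_{-i})$. An equilibrium is $x^*$ with $x_i^*\in\mathcal B_i(x^*_{-i})$ for all $i$; $\mathcal X^*$ is the set of equilibria. The game is super-modular if for every $i$, $u_i(1,x_{-i})-u_i(-1,x_{-i})\ge u_i(1,y_{-i})-u_i(-1,y_{-i})$ whenever $x_{-i}\ge y_{-i}$ (componentwise order). $x\vee y$, $x\wedge y$ are the entrywise max and min; $\bigvee L,\bigwedge L$ those of a set. Paths: a length-$l$ admissible path from $x$ to $y$ is $(x^{(0)},\dots,x^{(l)})$ with $x^{(0)}=x$, $x^{(l)}=y$, and for each $k=1,\dots,l$ a player $i_k$ with $x^{(k)}_{-i_k}=x^{(k-1)}_{-i_k}$ and $x^{(k)}_{i_k}\ne x^{(k-1)}_{i_k}$ (length $0$ allowed). It is an I-path if $u_{i_k}(x^{(k)})>u_{i_k}(x^{(k-1)})$ for all $k$, a BR-path if $u_{i_k}(x^{(k)})\ge u_{i_k}(x^{(k-1)})$ for all $k$; monotone if $x^{(0)}\lneq x^{(1)}\lneq\cdots\lneq x^{(l)}$, anti-monotone if $x^{(0)}\gneq\cdots\gneq x^{(l)}$ (where $x\lneq y$ means $x\le y$, $x\neq y$). For $\alpha\in\{\mathrm{I},\mathrm{BR}\}$: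 $\mathcal Y\subseteq\mathcal X$ is $\alpha$-reachable from $x$ if there is an $\alpha$-path from $x$ to some $y\in\mathcal Y$; globally $\alpha$-reachable if $\alpha$-reachable from every $x$; $\alpha$-invariant if there is no $\alpha$-path from any $y\in\mathcal Y$ to any $z\notin\mathcal Y$; globally $\alpha$-stable if globally $\alpha$-reachable and $\alpha$-invariant. A configuration $y$ is I-reachable (BR-reachable) from $x$ if $\{y\}$ is. Maps: $f^+(x)=\bigvee\{y: y$ reachable from $x$ by a monotone I-path$\}$, $f^-(x)=\bigwedge\{y: y$ reachable from $x$ by an anti-monotone I-path$\}$, $g^+(x)=\bigvee\{y: y$ reachable from $x$ by a monotone BR-path$\}$, $g^-(x)=\bigwedge\{y: y$ reachable from $x$ by an anti-monotone BR-path$\}$. *)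

(* Defs.v *)
(* Actions {-1,+1} are encoded as bool: false = -1, true = +1,
   so the order -1 < +1 is false < true. *)
From mathcomp Require Import all_boot all_order all_algebra.
Set Implicit Arguments. Unset Strict Implicit. Unset Printing Implicit Defensive.
Import Order.TTheory GRing.Theory Num.Theory.
Local Open Scope ring_scope.

Section Game.
Variables (R : realDomainType) (V : finType).

Definition config := {ffun V -> bool}.

Definition leC (x y : config) : bool := [forall i, x i ==> y i].
Definition ltC (x y : config) : bool := leC x y && (x != y).

Definition cjoin (x y : config) : config := [ffun i => x i || y i].
Definition cmeet (x y : config) : config := [ffun i => x i && y i].
Definition bigjoin (S : pred config) : config := [ffun i => [exists y, S y && y i]].
Definition bigmeet (S : pred config) : config := [ffun i => [forall y, S y ==> y i]].

Definition cm1 : config := [ffun => false].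
Definition cp1 : config := [ffun => true].

Definition upd (x : config) (i : V) (a : bool) : config :=
  [ffun j => if j == i then a else x j].

Variable u : V -> config -> R.

Definition supermodular : Prop :=
  forall (i : V) (x y : config), (forall j, j != i -> y j ==> x j) ->
    u i (upd y i true) - u i (upd y i false) <= u i (upd x i true) - u i (upd x i false).

Definition best_resp (i : V) (x : config) : pred bool :=
  fun a => [forall b, u i (upd x i b) <= u i (upd x i a)].

Definition equilibrium (x : config) : bool := [forall i, best_resp i x (x i)].

Definition Istep (x y : config) : bool :=
  [exists i, (y == upd x i (~~ x i)) && (u i x < u i y)].
Definition BRstep (x y : config) : bool :=
  [exists i, (y == upd x i (~~ x i)) && (u i x <= u i y)].
Definition mon (e : rel config) : rel config := fun x y => e x y && ltC x y.
Definition amon (e : rel config) : rel config := fun x y => e x y && ltC y x.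

(* alpha-paths: a configuration y is reachable from x by an e-path iff
   connect e x y (reflexive-transitive closure, length 0 allowed) *)
Definition reachable_set (e : rel config) (x : config) (Y : pred config) : Prop :=
  exists2 y, Y y & connect e x y.
Definition glob_reachable (e : rel config) (Y : pred config) : Prop :=
  forall x, reachable_set e x Y.
Definition invariant (e : rel config) (Y : pred config) : Prop :=
  forall y z, Y y -> connect e y z -> Y z.
Definition glob_stable (e : rel config) (Y : pred config) : Prop :=
  glob_reachable e Y /\ invariant e Y.

Definition fplus (x : config) : config := bigjoin (connect (mon Istep) x).
Definition fminus (x : config) : config := bigmeet (connect (amon Istep) x).
Definition gplus (x : config) : config := bigjoin (connect (mon BRstep) x).
Definition gminus (x : config) : config := bigmeet (connect (amon BRstep) x).

Definition greatest (P : config -> Prop) (z : config) : Prop :=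
  P z /\ forall w, P w -> leC w z.
Definition least (P : config -> Prop) (z : config) : Prop :=
  P z /\ forall w, P w -> leC z w.

End Game.

(* Main.v *)
Require Import Defs.
From mathcomp Require Import all_boot all_order all_algebra.
Set Implicit Arguments. Unset Strict Implicit. Unset Printing Implicit Defensive.
Import Order.TTheory GRing.Theory Num.Theory.
Local Open Scope ring_scope.

Lemma conn_inv (T : finType) (e : rel T) (Q : T -> Prop) :
  (forall a b, Q a -> e a b -> Q b) -> forall x y, Q x -> connect e x y -> Q y.
Proof.
move=> H x y Qx /connectP [p pp ->]; elim: p x Qx pp => //= a p IH x Qx /andP [exa pa].
exact: IH (H _ _ Qx exa) pa.
Qed.

Section Gen.
Variable V : finType.
Implicit Types x y z w : config V.

Lemma leCP x y : reflect (forall i, x i -> y i) (leC x y).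
Proof.
apply: (iffP forallP) => H i; first exact: (implyP (H i)).
by apply/implyP; apply: H.
Qed.

Lemma leC_refl x : leC x x.
Proof. by apply/leCP. Qed.

Lemma leC_trans x y z : leC x y -> leC y z -> leC x z.
Proof. by move=> /leCP h1 /leCP h2; apply/leCP => i /h1 /h2. Qed.

Lemma leC_anti x y : leC x y -> leC y x -> x = y.
Proof.
by move=> /leCP h1 /leCP h2; apply/ffunP => i; apply/idP/idP => [/h1|/h2].
Qed.

Lemma upd_id x i : upd x i (x i) = x.
Proof. by apply/ffunP => j; rewrite ffunE; case: eqP => // ->. Qed.

Lemma upd_upd x i a b : upd (upd x i a) i b = upd x i b.
Proof. by apply/ffunP => j; rewrite !ffunE; case: eqP. Qed.

Lemma upd_at x i a : upd x i a i = a.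
Proof. by rewrite ffunE eqxx. Qed.

Lemma upd_ne x i a j : j != i -> upd x i a j = x j.
Proof. by rewrite ffunE => /negbTE ->. Qed.

Definition cnt x := #|[set j | x j]|.

Lemma cnt_eq x y : leC x y -> (cnt y <= cnt x)%N -> x = y.
Proof.
move=> /leCP h hc.
have : [set j | x j] == [set j | y j].
  by rewrite eqEcard hc andbT; apply/subsetP => j; rewrite !inE => /h.
move/eqP => E; apply/ffunP => j.
have : j \in [set j | x j] = (j \in [set j | y j]) by rewrite E.
by rewrite !inE.
Qed.

Definition upstep (P : V -> config V -> bool) : rel (config V) :=
  fun x y => [exists i, ~~ x i && (y == upd x i true) && P i x].
Definition dnstep (Q : V -> config V -> bool) : rel (config V) :=
  fun x y => [exists i, x i && (y == upd x i false) && Q i x].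

Definition closedU (P : V -> config V -> bool) x := forall i, P i x -> x i.
Definition closedD (Q : V -> config V -> bool) x := forall i, Q i x -> ~~ x i.

Lemma upstep_le P x y : upstep P x y -> leC x y.
Proof.
case/existsP => i /andP [/andP [_ /eqP ->] _]; apply/leCP => j.
by rewrite ffunE; case: eqP.
Qed.

Lemma dnstep_le Q x y : dnstep Q x y -> leC y x.
Proof.
case/existsP => i /andP [/andP [_ /eqP ->] _]; apply/leCP => j.
by rewrite ffunE; case: eqP.
Qed.

Section Up.
Variable P : V -> config V -> bool.
Hypothesis Pmono : forall i z w, leC z w -> P i z -> P i w.

Lemma up_join x y z : leC x y -> connect (upstep P) x z ->
  connect (upstep P) y (cjoin y z).
Proof.
move=> xy; apply: (@conn_inv _ _ (fun z => connect (upstep P) y (cjoin y z))).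
- move=> a b ha /existsP [i /andP [/andP [ai /eqP ->] Pa]].
  case hi: (cjoin y a i).
  + suff -> : cjoin y (upd a i true) = cjoin y a by [].
    apply/ffunP => j; rewrite !ffunE; case: eqP => [->|//].
    by move: hi; rewrite ffunE (negbTE ai) orbF => ->.
  + apply: connect_trans ha (connect1 _); apply/existsP; exists i.
    rewrite hi /=; apply/andP; split.
    * apply/eqP/ffunP => j; rewrite !ffunE; case: eqP => [->|//]; exact: orbT.
    * apply: Pmono Pa; apply/leCP => j; rewrite ffunE => ->; exact: orbT.
- suff -> : cjoin y x = y by [].
  apply/ffunP => j; rewrite ffunE; apply/idP/idP => [/orP [//|] |->//].
  exact: (leCP _ _ xy).
Qed.

Definition Fup x := bigjoin (connect (upstep P) x).

Lemma reach_ge x y : connect (upstep P) x y -> leC x y.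
Proof.
apply: (@conn_inv _ _ (fun y => leC x y)); last exact: leC_refl.
by move=> a b h /upstep_le; apply: leC_trans.
Qed.

Lemma Fup_spec x : connect (upstep P) x (Fup x) /\
  forall y, connect (upstep P) x y -> leC y (Fup x).
Proof.
case: (@arg_maxnP _ x (connect (upstep P) x) cnt (connect0 _ _)) => m Sm Hm.
have Hle : forall y, connect (upstep P) x y -> leC y m.
  move=> y Sy; have xm := reach_ge Sm.
  have Sj : connect (upstep P) x (cjoin m y) := connect_trans Sm (up_join xm Sy).
  have mj : leC m (cjoin m y) by apply/leCP => j; rewrite ffunE => ->.
  rewrite (cnt_eq mj (Hm _ Sj)).
  by apply/leCP => j; rewrite ffunE => ->; rewrite orbT.
suff -> : Fup x = m by [].
apply/ffunP => i; rewrite ffunE; apply/existsP/idP => [[y /andP [Sy yi]] | mi].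
  exact: (leCP _ _ (Hle _ Sy)).
by exists m; rewrite Sm mi.
Qed.

Lemma Fup_reach x : connect (upstep P) x (Fup x).
Proof. by case: (Fup_spec x). Qed.

Lemma Fup_ge x : leC x (Fup x).
Proof. by case: (Fup_spec x) => _; apply; apply: connect0. Qed.

Lemma Fup_closed x : closedU P (Fup x).
Proof.
move=> i Pi; apply/negPn/negP => ni.
have S1 : connect (upstep P) x (upd (Fup x) i true).
  apply: connect_trans (Fup_reach x) (connect1 _).
  by apply/existsP; exists i; rewrite ni eqxx Pi.
have := leCP _ _ ((Fup_spec x).2 _ S1) i; rewrite upd_at => /(_ isT).
by move/negP: ni.
Qed.

Lemma below_closed w x z : closedU P w -> leC x w -> connect (upstep P) x z -> leC z w.
Proof.
move=> cw; apply: (@conn_inv _ _ (fun z => leC z w)).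
move=> a b /leCP aw /existsP [i /andP [/andP [_ /eqP ->] Pa]].
apply/leCP => j; rewrite ffunE; case: eqP => [-> _|_ /aw //].
apply: cw; apply: Pmono Pa; exact/leCP.
Qed.

Lemma Fup_least x w : leC x w -> closedU P w -> leC (Fup x) w.
Proof. by move=> xw cw; apply: below_closed cw xw (Fup_reach x). Qed.

End Up.

Section Dn.
Variable Q : V -> config V -> bool.
Hypothesis Qanti : forall i z w, leC w z -> Q i z -> Q i w.

Lemma dn_meet x y z : leC y x -> connect (dnstep Q) x z ->
  connect (dnstep Q) y (cmeet y z).
Proof.
move=> yx; apply: (@conn_inv _ _ (fun z => connect (dnstep Q) y (cmeet y z))).
- move=> a b ha /existsP [i /andP [/andP [ai /eqP ->] Qa]].
  case hi: (cmeet y a i).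
  + apply: connect_trans ha (connect1 _); apply/existsP; exists i.
    rewrite hi /=; apply/andP; split.
    * apply/eqP/ffunP => j; rewrite !ffunE; case: eqP => [->|//]; exact: andbF.
    * apply: Qanti Qa; apply/leCP => j; by rewrite ffunE => /andP [_ ->].
  + suff -> : cmeet y (upd a i false) = cmeet y a by [].
    apply/ffunP => j; rewrite !ffunE; case: eqP => [->|//].
    by move: hi; rewrite ffunE ai andbT => ->.
- suff -> : cmeet y x = y by [].
  apply/ffunP => j; rewrite ffunE; apply/idP/idP => [/andP [] //| yj].
  by rewrite yj (leCP _ _ yx).
Qed.

Definition Gdn x := bigmeet (connect (dnstep Q) x).

Lemma reach_le x y : connect (dnstep Q) x y -> leC y x.
Proof.
apply: (@conn_inv _ _ (fun y => leC y x)); last exact: leC_refl.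
by move=> a b h /dnstep_le ba; apply: leC_trans ba h.
Qed.

Lemma Gdn_spec x : connect (dnstep Q) x (Gdn x) /\
  forall y, connect (dnstep Q) x y -> leC (Gdn x) y.
Proof.
case: (@arg_minnP _ x (connect (dnstep Q) x) cnt (connect0 _ _)) => m Sm Hm.
have Hle : forall y, connect (dnstep Q) x y -> leC m y.
  move=> y Sy; have xm := reach_le Sm.
  have Sj : connect (dnstep Q) x (cmeet m y) := connect_trans Sm (dn_meet xm Sy).
  have mj : leC (cmeet m y) m by apply/leCP => j; rewrite ffunE => /andP [->].
  rewrite -(cnt_eq mj (Hm _ Sj)).
  by apply/leCP => j; rewrite ffunE => /andP [_ ->].
suff -> : Gdn x = m by [].
apply/ffunP => i; rewrite ffunE; apply/forallP/idP => [H | mi y].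
  exact: (implyP (H m) Sm).
by apply/implyP => Sy; apply: (leCP _ _ (Hle _ Sy)).
Qed.

Lemma Gdn_reach x : connect (dnstep Q) x (Gdn x).
Proof. by case: (Gdn_spec x). Qed.

Lemma Gdn_le x : leC (Gdn x) x.
Proof. by case: (Gdn_spec x) => _; apply; apply: connect0. Qed.

Lemma Gdn_closed x : closedD Q (Gdn x).
Proof.
move=> i Qi; apply/negP => ni.
have S1 : connect (dnstep Q) x (upd (Gdn x) i false).
  apply: connect_trans (Gdn_reach x) (connect1 _).
  by apply/existsP; exists i; rewrite ni eqxx Qi.
by have := leCP _ _ ((Gdn_spec x).2 _ S1) i ni; rewrite upd_at.
Qed.

Lemma above_closed w x z : closedD Q w -> leC w x -> connect (dnstep Q) x z -> leC w z.
Proof.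
move=> cw; apply: (@conn_inv _ _ (fun z => leC w z)).
move=> a b /leCP aw /existsP [i /andP [/andP [_ /eqP ->] Qa]].
apply/leCP => j wj; rewrite ffunE; case: eqP => [ej|_]; last exact: aw.
move: wj; rewrite ej => wi.
have : Q i w by apply: Qanti Qa; apply/leCP.
by move/cw; rewrite wi.
Qed.

Lemma Gdn_greatest x w : leC w x -> closedD Q w -> leC w (Gdn x).
Proof. by move=> xw cw; apply: above_closed cw xw (Gdn_reach x). Qed.

End Dn.
End Gen.
Section Game.
Variables (R : realDomainType) (V : finType) (u : V -> config V -> R).
Hypothesis hsm : supermodular u.
Implicit Types x y z w : config V.

Definition d i x := u i (upd x i true) - u i (upd x i false).

Lemma d_upd i x a : d i (upd x i a) = d i x.
Proof. by rewrite /d !upd_upd. Qed.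

Lemma d_mono i z w : leC z w -> d i z <= d i w.
Proof. move=> /leCP h; apply: hsm => j _; apply/implyP; exact: h. Qed.

Definition step (cmp : R -> R -> bool) : rel (config V) :=
  fun x y => [exists i, (y == upd x i (~~ x i)) && cmp (u i x) (u i y)].

Definition Pc (cmp : R -> R -> bool) i x := cmp 0 (d i x).
Definition Qc (cmp : R -> R -> bool) i x := cmp (d i x) 0.

Section Cmp.
Variable cmp : R -> R -> bool.
Hypothesis h1 : forall a b, cmp a b = cmp 0 (b - a).
Hypothesis h2 : forall a b, cmp a b = cmp (a - b) 0.

Lemma u_flip x i : cmp (u i x) (u i (upd x i (~~ x i))) = if x i then Qc cmp i x else Pc cmp i x.
Proof.
rewrite /Qc /Pc /d; case hx: (x i) => /=.
- by rewrite -{1}(upd_id x i) hx h2.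
- by rewrite -{1}(upd_id x i) hx h1.
Qed.

Lemma step_cases x y : step cmp x y -> upstep (Pc cmp) x y || dnstep (Qc cmp) x y.
Proof.
case/existsP => i /andP [/eqP -> h]; rewrite u_flip in h.
apply/orP; case hx: (x i) h => h; [right|left]; apply/existsP; exists i;
  by rewrite hx h /= eqxx.
Qed.

Lemma up_step x y : upstep (Pc cmp) x y -> step cmp x y.
Proof.
case/existsP => i /andP [/andP [hx /eqP ->] h]; apply/existsP; exists i.
have := u_flip x i; rewrite (negbTE hx) /= => ->.
by rewrite eqxx h.
Qed.

Lemma dn_step x y : dnstep (Qc cmp) x y -> step cmp x y.
Proof.
case/existsP => i /andP [/andP [hx /eqP ->] h]; apply/existsP; exists i.
have := u_flip x i; rewrite hx /= => ->.
by rewrite eqxx h.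
Qed.

Lemma mon_step : mon (step cmp) =2 upstep (Pc cmp).
Proof.
move=> x y; apply/andP/idP => [[st /andP [xy nxy]] | st]; last first.
  split; first exact: up_step. apply/andP; split; first exact: upstep_le st.
  case/existsP: st => i /andP [/andP [hx /eqP ->] _]; apply/eqP => e.
  by move: hx; rewrite {1}e upd_at.
case/orP: (step_cases st) => // /dnstep_le yx.
by rewrite (leC_anti xy yx) eqxx in nxy.
Qed.

Lemma amon_step : amon (step cmp) =2 dnstep (Qc cmp).
Proof.
move=> x y; apply/andP/idP => [[st /andP [yx nxy]] | st]; last first.
  split; first exact: dn_step. apply/andP; split; first exact: dnstep_le st.
  case/existsP: st => i /andP [/andP [hx /eqP ->] _]; apply/eqP => e.
  by move: hx; rewrite -{1}e upd_at.
case/orP: (step_cases st) => // /upstep_le xy.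
by rewrite (leC_anti xy yx) eqxx in nxy.
Qed.
End Cmp.

Definition ltr' := fun a b : R => a < b.
Definition ler' := fun a b : R => a <= b.
Definition PI := Pc ltr'.
Definition QI := Qc ltr'.
Definition PB := Pc ler'.
Definition QB := Qc ler'.

Lemma h1I a b : ltr' a b = ltr' 0 (b - a). Proof. by rewrite /ltr' subr_gt0. Qed.
Lemma h2I a b : ltr' a b = ltr' (a - b) 0. Proof. by rewrite /ltr' subr_lt0. Qed.
Lemma h1B a b : ler' a b = ler' 0 (b - a). Proof. by rewrite /ler' subr_ge0. Qed.
Lemma h2B a b : ler' a b = ler' (a - b) 0. Proof. by rewrite /ler' subr_le0. Qed.

Lemma IstepS : Istep u =2 step ltr'. Proof. by []. Qed.
Lemma BRstepS : BRstep u =2 step ler'. Proof. by []. Qed.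

Lemma PI_mono i z w : leC z w -> PI i z -> PI i w.
Proof. by move=> h; rewrite /PI /Pc /ltr' => /lt_le_trans; apply; apply: d_mono. Qed.
Lemma PB_mono i z w : leC z w -> PB i z -> PB i w.
Proof. by move=> h; rewrite /PB /Pc /ler' => /le_trans; apply; apply: d_mono. Qed.
Lemma QI_anti i z w : leC w z -> QI i z -> QI i w.
Proof. by move=> h; rewrite /QI /Qc /ltr'; apply: le_lt_trans; apply: d_mono. Qed.
Lemma QB_anti i z w : leC w z -> QB i z -> QB i w.
Proof. by move=> h; rewrite /QB /Qc /ler'; apply: le_trans; apply: d_mono. Qed.

Lemma IstepC x y : Istep u x y -> upstep PI x y || dnstep QI x y.
Proof. exact: (step_cases h1I h2I). Qed.
Lemma BRstepC x y : BRstep u x y -> upstep PB x y || dnstep QB x y.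
Proof. exact: (step_cases h1B h2B). Qed.

Lemma I_BR x y : Istep u x y -> BRstep u x y.
Proof.
case/existsP => i /andP [e h]; apply/existsP; exists i; by rewrite e ltW.
Qed.

Lemma conn_upI x y : connect (upstep PI) x y -> connect (Istep u) x y.
Proof. apply: connect_sub => a b h; apply: connect1; exact: (up_step h1I h2I). Qed.
Lemma conn_dnI x y : connect (dnstep QI) x y -> connect (Istep u) x y.
Proof. apply: connect_sub => a b h; apply: connect1; exact: (dn_step h1I h2I). Qed.
Lemma conn_IB x y : connect (Istep u) x y -> connect (BRstep u) x y.
Proof. apply: connect_sub => a b h; apply: connect1; exact: I_BR. Qed.
Lemma conn_upB x y : connect (upstep PB) x y -> connect (BRstep u) x y.
Proof. apply: connect_sub => a b h; apply: connect1; exact: (up_step h1B h2B). Qed.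
Lemma conn_dnB x y : connect (dnstep QB) x y -> connect (BRstep u) x y.
Proof. apply: connect_sub => a b h; apply: connect1; exact: (dn_step h1B h2B). Qed.

Lemma bigjoin_eq (S S' : pred (config V)) : S =1 S' -> bigjoin S = bigjoin S'.
Proof. by move=> E; apply/ffunP => i; rewrite !ffunE; apply: eq_existsb => y; rewrite E. Qed.
Lemma bigmeet_eq (S S' : pred (config V)) : S =1 S' -> bigmeet S = bigmeet S'.
Proof. by move=> E; apply/ffunP => i; rewrite !ffunE; apply: eq_forallb => y; rewrite E. Qed.

Lemma fplusE x : fplus u x = Fup PI x.
Proof. apply: bigjoin_eq => y; apply: eq_connect => a b; exact: (mon_step h1I h2I). Qed.
Lemma gplusE x : gplus u x = Fup PB x.
Proof. apply: bigjoin_eq => y; apply: eq_connect => a b; exact: (mon_step h1B h2B). Qed.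
Lemma fminusE x : fminus u x = Gdn QI x.
Proof. apply: bigmeet_eq => y; apply: eq_connect => a b; exact: (amon_step h1I h2I). Qed.
Lemma gminusE x : gminus u x = Gdn QB x.
Proof. apply: bigmeet_eq => y; apply: eq_connect => a b; exact: (amon_step h1B h2B). Qed.

Lemma eqmC x : equilibrium u x <-> closedU PI x /\ closedD QI x.
Proof.
rewrite /PI /QI /Pc /Qc /ltr' /d; split.
  move/forallP => H; split => i; have /forallP Hi := H i; case hx: (x i) => //= Pi.
    move: (Hi true); rewrite hx -subr_le0 => H'.
    by rewrite ltNge H' in Pi.
  move: (Hi false); rewrite hx -subr_ge0 => H'.
  by rewrite ltNge H' in Pi.
case=> H1 H2; apply/forallP => i; apply/forallP => b.
have := H1 i; have := H2 i; case hx: (x i); case: b => //= hQ hP; rewrite ?lexx //.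
  by rewrite -subr_ge0 leNgt; apply/negP => /hQ.
by rewrite -subr_le0 leNgt; apply/negP => /hP.
Qed.

Lemma presD (P : V -> config V -> bool) x z : (forall i z, P i z -> 0 <= d i z) -> closedD QI x ->
  connect (upstep P) x z -> closedD QI z.
Proof.
move=> hP; apply: (@conn_inv _ _ (closedD QI)) => a b ca st.
have ab := upstep_le st.
case/existsP: st => i /andP [/andP [ai /eqP eb] Pa] j.
case: (eqVneq j i) => [->|ne].
  by rewrite /QI /Qc /ltr' eb d_upd ltNge (hP _ _ Pa).
move=> /(QI_anti ab) /ca; by rewrite eb upd_ne.
Qed.

Lemma presU (Q : V -> config V -> bool) x z : (forall i z, Q i z -> d i z <= 0) -> closedU PI x ->
  connect (dnstep Q) x z -> closedU PI z.
Proof.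
move=> hQ; apply: (@conn_inv _ _ (closedU PI)) => a b ca st.
have ba := dnstep_le st.
case/existsP: st => i /andP [/andP [ai /eqP eb] Qa] j.
case: (eqVneq j i) => [->|ne].
  by rewrite /PI /Pc /ltr' eb d_upd ltNge (hQ _ _ Qa).
move=> /(PI_mono ba) /ca; by rewrite eb upd_ne.
Qed.

Lemma reach_below (P : V -> config V -> bool) (e : rel (config V)) x z w :
  (forall i z w, leC z w -> P i z -> P i w) ->
  (forall a b, e a b -> upstep P a b || leC b a) ->
  closedU P w -> leC x w -> connect e x z -> leC z w.
Proof.
move=> Pm he cw; apply: (@conn_inv _ _ (fun z => leC z w)) => a b aw /he /orP [st|ba].
  exact: (below_closed Pm cw aw (connect1 st)).
exact: leC_trans ba aw.
Qed.

Lemma reach_above (Q : V -> config V -> bool) (e : rel (config V)) x z w :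
  (forall i z w, leC w z -> Q i z -> Q i w) ->
  (forall a b, e a b -> dnstep Q a b || leC a b) ->
  closedD Q w -> leC w x -> connect e x z -> leC w z.
Proof.
move=> Qa he cw; apply: (@conn_inv _ _ (fun z => leC w z)) => a b aw /he /orP [st|ab].
  exact: (above_closed Qa cw aw (connect1 st)).
exact: leC_trans aw ab.
Qed.

Lemma I_up a b : Istep u a b -> upstep PI a b || leC b a.
Proof. by move=> h; case/orP: (IstepC h) => [->//| /dnstep_le ->]; rewrite orbT. Qed.
Lemma I_dn a b : Istep u a b -> dnstep QI a b || leC a b.
Proof. by move=> h; case/orP: (IstepC h) => [/upstep_le ->| ->//]; rewrite orbT. Qed.
Lemma B_up a b : BRstep u a b -> upstep PB a b || leC b a.
Proof. by move=> h; case/orP: (BRstepC h) => [->//| /dnstep_le ->]; rewrite orbT. Qed.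
Lemma B_dn a b : BRstep u a b -> dnstep QB a b || leC a b.
Proof. by move=> h; case/orP: (BRstepC h) => [/upstep_le ->| ->//]; rewrite orbT. Qed.


Lemma lub x : closedD QI x ->
  [/\ equilibrium u (Fup PI x), leC x (Fup PI x) &
      forall w, equilibrium u w -> leC x w -> leC (Fup PI x) w].
Proof.
move=> cx; split.
- apply/eqmC; split; first exact: (Fup_closed PI_mono).
  exact: (presD (fun i z h => ltW h) cx (Fup_reach PI_mono x)).
- exact (Fup_ge PI_mono x).
- by move=> w /eqmC [cw _] xw; apply: (Fup_least PI_mono).
Qed.

Lemma glb x : closedU PI x ->
  [/\ equilibrium u (Gdn QI x), leC (Gdn QI x) x &
      forall w, equilibrium u w -> leC w x -> leC w (Gdn QI x)].
Proof.
move=> cx; split.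
- apply/eqmC; split; last exact: (Gdn_closed QI_anti).
  exact: (presU (fun i z h => ltW h) cx (Gdn_reach QI_anti x)).
- exact (Gdn_le QI_anti x).
- by move=> w /eqmC [_ cw] xw; apply: (Gdn_greatest QI_anti).
Qed.

Lemma PI_PB x : closedU PB x -> closedU PI x.
Proof. by move=> h i /ltW /h. Qed.
Lemma QI_QB x : closedD QB x -> closedD QI x.
Proof. by move=> h i /ltW /h. Qed.

Lemma part_i x :
     greatest (fun w => equilibrium u w /\ connect (Istep u) x w)
              (fminus u (fplus u x)) /\
     least (fun w => equilibrium u w /\ connect (Istep u) x w)
           (fplus u (fminus u x)).
Proof.
rewrite !fplusE !fminusE; split.
- have cF := Fup_closed PI_mono (x:=x).
  have [eG _ gG] := glb cF.
  split; first split => //.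
    exact: connect_trans (conn_upI (Fup_reach PI_mono x)) (conn_dnI (Gdn_reach QI_anti _)).
  move=> w [ew cw]; apply: gG ew _.
  exact: (reach_below PI_mono I_up cF (Fup_ge PI_mono x) cw).
- have cG := Gdn_closed QI_anti (x:=x).
  have [eF _ lF] := lub cG.
  split; first split => //.
    exact: connect_trans (conn_dnI (Gdn_reach QI_anti x)) (conn_upI (Fup_reach PI_mono _)).
  move=> w [ew cw]; apply: lF ew _.
  exact: (reach_above QI_anti I_dn cG (Gdn_le QI_anti x) cw).
Qed.

Lemma part_ii x :
     greatest (fun w => equilibrium u w /\ connect (BRstep u) x w)
              (fminus u (gplus u x)) /\
     least (fun w => equilibrium u w /\ connect (BRstep u) x w)
           (fplus u (gminus u x)).
Proof.
rewrite fplusE gplusE fminusE gminusE; split.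
- have cF := Fup_closed PB_mono (x:=x).
  have [eG _ gG] := glb (PI_PB cF).
  split; first split => //.
    exact: connect_trans (conn_upB (Fup_reach PB_mono x)) (conn_IB (conn_dnI (Gdn_reach QI_anti _))).
  move=> w [ew cw]; apply: gG ew _.
  exact: (reach_below PB_mono B_up cF (Fup_ge PB_mono x) cw).
- have cG := Gdn_closed QB_anti (x:=x).
  have [eF _ lF] := lub (QI_QB cG).
  split; first split => //.
    exact: connect_trans (conn_dnB (Gdn_reach QB_anti x)) (conn_IB (conn_upI (Fup_reach PI_mono _))).
  move=> w [ew cw]; apply: lF ew _.
  exact: (reach_above QB_anti B_dn cG (Gdn_le QB_anti x) cw).
Qed.

Lemma part_iii x : equilibrium u x ->
        greatest (fun w => equilibrium u w /\ connect (BRstep u) x w) (gplus u x) /\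
        least (fun w => equilibrium u w /\ connect (BRstep u) x w) (gminus u x).
Proof.
move=> ex; have [cUx cDx] := eqmC x; have [cU cD] := cUx ex.
rewrite gplusE gminusE; split.
- have cF := Fup_closed PB_mono (x:=x).
  split.
    split; last exact: conn_upB (Fup_reach PB_mono x).
    apply/eqmC; split; first exact: PI_PB.
    exact: (presD (fun _ _ h => h) cD (Fup_reach PB_mono x)).
  move=> w [ew cw].
  exact: (reach_below PB_mono B_up cF (Fup_ge PB_mono x) cw).
- have cG := Gdn_closed QB_anti (x:=x).
  split.
    split; last exact: conn_dnB (Gdn_reach QB_anti x).
    apply/eqmC; split; last exact: QI_QB.
    exact: (presU (fun _ _ h => h) cU (Gdn_reach QB_anti x)).
  move=> w [ew cw].
  exact: (reach_above QB_anti B_dn cG (Gdn_le QB_anti x) cw).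
Qed.


Lemma eq_noI y z : equilibrium u y -> connect (Istep u) y z -> z = y.
Proof.
move=> ey; apply: (@conn_inv _ _ (fun z => z = y)) => // a b -> st.
have [cU cD] := (eqmC y).1 ey.
case/orP: (IstepC st) => /existsP [i /andP [/andP [hi _] h]].
  by move: hi; rewrite (cU i h).
by move: hi; rewrite (negbTE (cD i h)).
Qed.

Lemma part_iv :
  ((exists x, equilibrium u x) /\
   (forall S : {set config V}, {subset S <= equilibrium u} ->
      (exists s, least (fun w => equilibrium u w /\ forall y, y \in S -> leC y w) s) /\
      (exists s, greatest (fun w => equilibrium u w /\ forall y, y \in S -> leC w y) s)) /\
   glob_stable (Istep u) (equilibrium u)).
Proof.
split; last split.
- have [e _ _] := glb (Fup_closed PI_mono (x:=cm1 V)).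
  by exists (Gdn QI (Fup PI (cm1 V))).
- move=> S hS; split.
  + pose J := bigjoin (fun y => y \in S).
    have yJ : forall y, y \in S -> leC y J.
      move=> y yS; apply/leCP => j yj; rewrite ffunE; apply/existsP; exists y.
      by rewrite yS yj.
    have cJ : closedD QI J.
      move=> i qi; apply/negP; rewrite ffunE => /existsP [y /andP [yS yi]].
      have ey : equilibrium u y := hS y yS.
      have := ((eqmC y).1 ey).2 i (QI_anti (yJ y yS) qi).
      by rewrite yi.
    have [eF JF lF] := lub cJ.
    exists (Fup PI J); split.
      by split => // y yS; apply: leC_trans (yJ y yS) JF.
    move=> w [ew hw]; apply: lF ew _.
    apply/leCP => i; rewrite ffunE => /existsP [y /andP [yS yi]].
    exact: (leCP _ _ (hw y yS) i yi).
  + pose J := bigmeet (fun y => y \in S).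
    have yJ : forall y, y \in S -> leC J y.
      move=> y yS; apply/leCP => j; rewrite ffunE => /forallP /(_ y).
      by rewrite yS.
    have cJ : closedU PI J.
      move=> i pi; rewrite ffunE; apply/forallP => y; apply/implyP => yS.
      have ey : equilibrium u y := hS y yS.
      exact: ((eqmC y).1 ey).1 i (PI_mono (yJ y yS) pi).
    have [eG GJ gG] := glb cJ.
    exists (Gdn QI J); split.
      by split => // y yS; apply: leC_trans GJ (yJ y yS).
    move=> w [ew hw]; apply: gG ew _.
    apply/leCP => i wi; rewrite ffunE; apply/forallP => y; apply/implyP => yS.
    exact: (leCP _ _ (hw y yS) i wi).
- split.
  + move=> x; have [e _ _] := glb (Fup_closed PI_mono (x:=x)).
    exists (Gdn QI (Fup PI x)) => //.
    exact: connect_trans (conn_upI (Fup_reach PI_mono x)) (conn_dnI (Gdn_reach QI_anti _)).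
  + by move=> y z ey /(eq_noI ey) ->.
Qed.

Lemma gminus_cm1 : gminus u (cm1 V) = cm1 V.
Proof.
apply/ffunP => i; rewrite !ffunE; apply/negbTE/negP => /forallP /(_ (cm1 V)).
by rewrite connect0 ffunE.
Qed.

Lemma gplus_cp1 : gplus u (cp1 V) = cp1 V.
Proof.
apply/ffunP => i; rewrite !ffunE; apply/existsP; exists (cp1 V).
by rewrite connect0 ffunE.
Qed.

Lemma cD_cm1 : closedD QI (cm1 V).
Proof. by move=> i _; rewrite ffunE. Qed.
Lemma cU_cp1 : closedU PI (cp1 V).
Proof. by move=> i _; rewrite ffunE. Qed.
Lemma cm1_le w : leC (cm1 V) w.
Proof. by apply/leCP => i; rewrite ffunE. Qed.
Lemma le_cp1 w : leC w (cp1 V).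
Proof. by apply/leCP => i; rewrite ffunE. Qed.

Lemma part_v :
  (fplus u (gminus u (cm1 V)) = fplus u (cm1 V) /\
   least (fun w => equilibrium u w) (fplus u (cm1 V)) /\
   fminus u (gplus u (cp1 V)) = fminus u (cp1 V) /\
   greatest (fun w => equilibrium u w) (fminus u (cp1 V))).
Proof.
rewrite gminus_cm1 gplus_cp1 fplusE fminusE; split; [by [] | split; [|split => //]].
- have [e _ l] := lub cD_cm1; split => // w ew; exact: l ew (cm1_le w).
- have [e _ g] := glb cU_cp1; split => // w ew; exact: g ew (le_cp1 w).
Qed.

Lemma part_vi x y : equilibrium u x -> equilibrium u y ->
     least (fun w => equilibrium u w /\ leC x w /\ leC y w) (fplus u (cjoin x y)) /\
     greatest (fun w => equilibrium u w /\ leC w x /\ leC w y) (fminus u (cmeet x y)).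
Proof.
move=> ex ey; have [cUx cDx] := (eqmC x).1 ex; have [cUy cDy] := (eqmC y).1 ey.
rewrite fplusE fminusE; split.
- have xJ : leC x (cjoin x y) by apply/leCP => i; rewrite ffunE => ->.
  have yJ : leC y (cjoin x y) by apply/leCP => i; rewrite ffunE => ->; rewrite orbT.
  have cJ : closedD QI (cjoin x y).
    move=> i qi; rewrite ffunE negb_or; apply/andP; split.
      exact: cDx i (QI_anti xJ qi).
    exact: cDy i (QI_anti yJ qi).
  have [eF JF lF] := lub cJ.
  split; first by split => //; split; apply: leC_trans JF.
  move=> w [ew [xw yw]]; apply: lF ew _.
  by apply/leCP => i; rewrite ffunE => /orP [/(leCP _ _ xw)|/(leCP _ _ yw)].
- have xJ : leC (cmeet x y) x by apply/leCP => i; rewrite ffunE => /andP [->].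
  have yJ : leC (cmeet x y) y by apply/leCP => i; rewrite ffunE => /andP [_ ->].
  have cJ : closedU PI (cmeet x y).
    move=> i pi; rewrite ffunE; apply/andP; split.
      exact: cUx i (PI_mono xJ pi).
    exact: cUy i (PI_mono yJ pi).
  have [eG GJ gG] := glb cJ.
  split; first by split => //; split; apply: leC_trans GJ _.
  move=> w [ew [xw yw]]; apply: gG ew _.
  by apply/leCP => i wi; rewrite ffunE (leCP _ _ xw i wi) (leCP _ _ yw i wi).
Qed.

Lemma part_vii xs : fplus u (cm1 V) = xs -> fminus u (cp1 V) = xs ->
     (forall z, equilibrium u z <-> z = xs) /\
     glob_stable (BRstep u) (equilibrium u).
Proof.
rewrite fplusE fminusE => hF hG.
have [eF _ lF] := lub cD_cm1; have [eG _ gG] := glb cU_cp1.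
have Hz : forall z, equilibrium u z <-> z = xs.
  move=> z; split => [ez|->]; last by rewrite -hF.
  apply: leC_anti; first by rewrite -hG; exact: gG ez (le_cp1 z).
  by rewrite -hF; exact: lF ez (cm1_le z).
split => //; split.
- move=> x; have [e _ _] := glb (Fup_closed PI_mono (x:=x)).
  exists (Gdn QI (Fup PI x)) => //; apply: conn_IB.
  exact: connect_trans (conn_upI (Fup_reach PI_mono x)) (conn_dnI (Gdn_reach QI_anti _)).
- have exs : equilibrium u xs by apply/Hz.
  have [cU cD] := (eqmC xs).1 exs.
  move=> y z /Hz -> cz; apply/Hz.
  apply: (@conn_inv _ _ (fun z => z = xs)) (erefl _) cz => a b -> st.
  exfalso; case/orP: (BRstepC st) => st'.
  + have cb : closedD QI b := presD (fun _ _ h => h) cD (connect1 st').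
    have [eb bF _] := lub cb.
    have := (Hz _).1 eb => E; rewrite E in bF.
    case/existsP: st' => i /andP [/andP [hi /eqP eb'] _].
    by move: (leCP _ _ bF i); rewrite eb' upd_at (negbTE hi) => /(_ isT).
  + have cb : closedU PI b := presU (fun _ _ h => h) cU (connect1 st').
    have [eb Gb _] := glb cb.
    have := (Hz _).1 eb => E; rewrite E in Gb.
    case/existsP: st' => i /andP [/andP [hi /eqP eb'] _].
    by move: (leCP _ _ Gb i hi); rewrite eb' upd_at.
Qed.

End Game.

Theorem proposition2 (R : realDomainType) (V : finType)
    (u : V -> config V -> R) (hsm : supermodular u) :
  (forall x : config V,
     (* (i) *)
     greatest (fun w => equilibrium u w /\ connect (Istep u) x w)
              (fminus u (fplus u x)) /\
     least (fun w => equilibrium u w /\ connect (Istep u) x w)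
           (fplus u (fminus u x)) /\
     (* (ii) *)
     greatest (fun w => equilibrium u w /\ connect (BRstep u) x w)
              (fminus u (gplus u x)) /\
     least (fun w => equilibrium u w /\ connect (BRstep u) x w)
           (fplus u (gminus u x)) /\
     (* (iii) *)
     (equilibrium u x ->
        greatest (fun w => equilibrium u w /\ connect (BRstep u) x w) (gplus u x) /\
        least (fun w => equilibrium u w /\ connect (BRstep u) x w) (gminus u x))) /\
  (* (iv) nonempty complete lattice, globally I-stable *)
  ((exists x, equilibrium u x) /\
   (forall S : {set config V}, {subset S <= equilibrium u} ->
      (exists s, least (fun w => equilibrium u w /\ forall y, y \in S -> leC y w) s) /\
      (exists s, greatest (fun w => equilibrium u w /\ forall y, y \in S -> leC w y) s)) /\
   glob_stable (Istep u) (equilibrium u)) /\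
  (* (v) *)
  (fplus u (gminus u (cm1 V)) = fplus u (cm1 V) /\
   least (fun w => equilibrium u w) (fplus u (cm1 V)) /\
   fminus u (gplus u (cp1 V)) = fminus u (cp1 V) /\
   greatest (fun w => equilibrium u w) (fminus u (cp1 V))) /\
  (* (vi) *)
  (forall x y, equilibrium u x -> equilibrium u y ->
     least (fun w => equilibrium u w /\ leC x w /\ leC y w) (fplus u (cjoin x y)) /\
     greatest (fun w => equilibrium u w /\ leC w x /\ leC w y) (fminus u (cmeet x y))) /\
  (* (vii) *)
  (forall xs, fplus u (cm1 V) = xs -> fminus u (cp1 V) = xs ->
     (forall z, equilibrium u z <-> z = xs) /\
     glob_stable (BRstep u) (equilibrium u)).
Proof.
split.
  move=> x; have [i1 i2] := part_i hsm x; have [ii1 ii2] := part_ii hsm x.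
  by do 4? split => //; apply: part_iii hsm x.
split; first exact: part_iv hsm.
split; first exact: part_v hsm.
split; first exact: part_vi hsm.
exact: part_vii hsm.
Qed.
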